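(* Let $G_0$ be a connected graph containing vertices $u_1,u_2,u_3,u_4$ with $d_{G_0}(u_1)=1$, $d_{G_0}(u_2)=2$, $d_{G_0}(u_3)\in\{3,4\}$, $d_{G_0}(u_4)=1$, and $u_1u_2,u_3u_4\in E(G_0)$. Let $P=v_1v_2\cdots v_l$ ($l\ge 1$) be a path vertex-disjoint from $G_0$. Let $G_1$ be the graph obtained from the disjoint union of $G_0$ and $P$ by adding the edge $u_1v_1$, and let $G_2=G_1-u_1v_1+u_4v_1$. Then $SO(G_1)>SO(G_2)$ and $SO_{red}(G_1)>SO_{red}(G_2)$.
   Context: $d_G(u)$ denotes the degree of $u$ in $G$. $SO(G)=\sum_{uv\in E(G)}\sqrt{d_G(u)^2+d_G(v)^2}$ and $SO_{red}(G)=\sum_{uv\in E(G)}\sqrt{(d_G(u)-1)^2+(d_G(v)-1)^2}$. *)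

(* Defs.v *)
From mathcomp Require Import all_boot all_order all_algebra.
Set Implicit Arguments. Unset Strict Implicit. Unset Printing Implicit Defensive.
Import Order.TTheory GRing.Theory Num.Theory.
Local Open Scope ring_scope.

Definition simple_graph (T : finType) (e : rel T) : Prop :=
  symmetric e /\ irreflexive e.

Definition graph_connected (T : finType) (e : rel T) : Prop :=
  forall x y : T, connect e x y.

Definition deg (T : finType) (e : rel T) (u : T) : nat := #|[set v | e u v]|.

(* SO(G) = sum over edges uv of sqrt(d(u)^2 + d(v)^2); each (unordered) edge
   is counted twice in the sum over ordered adjacent pairs, hence the 1/2. *)
Definition SO (R : rcfType) (T : finType) (e : rel T) : R :=
  (\sum_(u : T) \sum_(v : T | e u v)
     Num.sqrt ((deg e u)%:R ^+ 2 + (deg e v)%:R ^+ 2)) / 2%:R.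

Definition SOred (R : rcfType) (T : finType) (e : rel T) : R :=
  (\sum_(u : T) \sum_(v : T | e u v)
     Num.sqrt (((deg e u)%:R - 1) ^+ 2 + ((deg e v)%:R - 1) ^+ 2)) / 2%:R.

(* The path v_1 v_2 ... v_{k+1} on vertex set 'I_k.+1 (vertex i is v_{i+1}). *)
Definition path_rel (k : nat) : rel 'I_k.+1 :=
  fun i j => (i.+1 == j :> nat) || (j.+1 == i :> nat).

Definition attach_rel (V0 : finType) (e0 : rel V0) (k : nat) (w : V0)
  : rel (V0 + 'I_k.+1)%type :=
  fun x y =>
    match x, y with
    | inl a, inl b => e0 a b
    | inr i, inr j => path_rel i j
    | inl a, inr j => (a == w) && (j == ord0)
    | inr i, inl b => (b == w) && (i == ord0)
    end.

Arguments attach_rel {V0} e0 k w x y.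
Arguments SO R {T} e.
Arguments SOred R {T} e.
Arguments deg {T} e u.

(* Main.v *)
Require Import Defs.
From mathcomp Require Import all_boot all_order all_algebra ring lra.
Import Order.TTheory GRing.Theory Num.Theory.
Local Open Scope ring_scope.

Lemma deg_sum (T : finType) (e : rel T) u : deg e u = (\sum_v (e u v : nat))%N.
Proof.
rewrite /deg -sum1_card big_mkcond /=; apply: eq_bigr => v _.
by rewrite inE; case: (e u v).
Qed.

Lemma sum_eqc (T : finType) (w : T) (c : bool) :
  (\sum_(b : T) (((b == w) && c) : nat))%N = c.
Proof.
rewrite (bigD1 w) //= eqxx big1 ?addn0 // => b /negbTE ->; done.
Qed.

Lemma deg_inl (V0 : finType) (e0 : rel V0) k w a :
  deg (attach_rel e0 k w) (inl a) = (deg e0 a + (a == w))%N.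
Proof.
rewrite deg_sum big_sumType /= -deg_sum; congr addn.
case: (a == w) => /=; last by rewrite big1.
have := @sum_eqc _ (@ord0 k) true.
by under eq_bigr do rewrite andbT.
Qed.

Lemma deg_inr (V0 : finType) (e0 : rel V0) k w w' i :
  deg (attach_rel e0 k w) (inr i) = deg (attach_rel e0 k w') (inr i).
Proof.
by rewrite !deg_sum !big_sumType /= !sum_eqc.
Qed.

Lemma nb_unique (T : finType) (e : rel T) u v b :
  deg e u = 1%N -> e u v -> e u b = (b == v).
Proof.
move=> du euv.
have : [set x | e u x] = [set v].
  apply/eqP; rewrite eq_sym eqEcard sub1set inE euv cards1 /=.
  by rewrite -/(deg e u) du.
by move/setP/(_ b); rewrite !inE.
Qed.

Lemma sum_diff (R : zmodType) (T : finType) (a b : T -> R) (s : seq T) :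
  uniq s -> (forall x, x \notin s -> a x = b x) ->
  \sum_x a x - \sum_x b x = \sum_(x <- s) (a x - b x).
Proof.
move=> us hab.
rewrite [RHS]big_uniq // [\sum_x a x](bigID (mem s)) [\sum_x b x](bigID (mem s)) /=.
rewrite [X in _ - (_ + X)](eq_bigr a); last by move=> x /= hx; rewrite hab.
rewrite opprD addrACA subrr addr0 sumrB.
by [].
Qed.

Lemma eq_inl (A B : eqType) (a b : A) : (inl a == inl b :> (A + B)%type) = (a == b).
Proof. by []. Qed.
Lemma eq_inr (A B : eqType) (a b : B) : (inr a == inr b :> (A + B)%type) = (a == b).
Proof. by []. Qed.
Lemma eq_inlr (A B : eqType) (a : A) (b : B) : (inl a == inr b :> (A + B)%type) = false.
Proof. by []. Qed.
Lemma eq_inrl (A B : eqType) (a : A) (b : B) : (inr b == inl a :> (A + B)%type) = false.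
Proof. by []. Qed.

Definition hh (R : rcfType) (phi : nat -> nat -> R) (T : finType) (E : rel T) x y : R :=
  if E x y then phi (deg E x) (deg E y) else 0.

Definition SS (R : rcfType) (phi : nat -> nat -> R) (T : finType) (E : rel T) : R :=
  \sum_(u : T) \sum_(v : T | E u v) phi (deg E u) (deg E v).

Arguments hh {R} phi {T} E x y.
Arguments SS {R} phi {T} E.
Lemma SS_h (R : rcfType) (phi : nat -> nat -> R) (T : finType) (E : rel T) :
  SS phi E = \sum_x \sum_y hh phi E x y.
Proof. by apply: eq_bigr => x _; rewrite big_mkcond. Qed.

Lemma main_diff (R : rcfType) (phi : nat -> nat -> R) (V0 : finType) (e0 : rel V0)
  (u1 u2 u3 u4 : V0) (k : nat) :
  symmetric e0 -> deg e0 u1 = 1%N -> deg e0 u2 = 2%N ->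
  deg e0 u3 != 1%N -> deg e0 u3 != 2%N -> deg e0 u4 = 1%N ->
  e0 u1 u2 -> e0 u3 u4 ->
  SS phi (attach_rel e0 k u1) - SS phi (attach_rel e0 k u4) =
  phi 2 2 *+ 2 - phi 1 2 - phi 2 1 + phi (deg e0 u3) 1 + phi 1 (deg e0 u3)
   - phi (deg e0 u3) 2 - phi 2 (deg e0 u3).
Proof.
move=> Hs d1 d2 d31 d32 d4 e12 e34.
set E1 := attach_rel e0 k u1; set E2 := attach_rel e0 k u4.
set d3 := deg e0 u3.
have n12 : u1 != u2 by apply/eqP => h; move: d2; rewrite -h d1.
have n13 : u1 != u3 by apply/eqP => h; move: d31; rewrite /d3 -h d1.
have n23 : u2 != u3 by apply/eqP => h; move: d32; rewrite /d3 -h d2.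
have n24 : u2 != u4 by apply/eqP => h; move: d2; rewrite h d4.
have n34 : u3 != u4 by apply/eqP => h; move: d31; rewrite /d3 h d4.
have nb1 : forall b, e0 u1 b = (b == u2) by move=> b; apply: nb_unique.
have nb1' : forall b, e0 b u1 = (b == u2) by move=> b; rewrite Hs.
have e43 : e0 u4 u3 by rewrite Hs.
have nb4 : forall b, e0 u4 b = (b == u3) by move=> b; apply: nb_unique.
have nb4' : forall b, e0 b u4 = (b == u3) by move=> b; rewrite Hs.
have n14 : u1 != u4.
  by apply/eqP => h; move: e43; rewrite -h nb1 eq_sym (negbTE n23).
have n21 : u2 != u1 by rewrite eq_sym.
have n31 : u3 != u1 by rewrite eq_sym.
have n41 : u4 != u1 by rewrite eq_sym.
have n42 : u4 != u2 by rewrite eq_sym.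
have n43 : u4 != u3 by rewrite eq_sym.
have n32 : u3 != u2 by rewrite eq_sym.
have D11 : deg E1 (inl u1) = 2%N by rewrite deg_inl d1 eqxx.
have D21 : deg E2 (inl u1) = 1%N by rewrite deg_inl d1 (negbTE n14).
have D14 : deg E1 (inl u4) = 1%N by rewrite deg_inl d4 (negbTE n41).
have D24 : deg E2 (inl u4) = 2%N by rewrite deg_inl d4 eqxx.
have D12 : deg E1 (inl u2) = 2%N by rewrite deg_inl d2 (negbTE n21).
have D22 : deg E2 (inl u2) = 2%N by rewrite deg_inl d2 (negbTE n24).
have D13 : deg E1 (inl u3) = d3 by rewrite deg_inl (negbTE n31) addn0.
have D23 : deg E2 (inl u3) = d3 by rewrite deg_inl (negbTE n34) addn0.
set dv := deg E1 (inr ord0).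
have Dr : deg E2 (inr ord0) = dv by apply: deg_inr.
pose good (x : (V0 + 'I_k.+1)%type) := (x != inl u1) && (x != inl u4).
have K1 : forall x y, good x -> good y -> hh phi E1 x y = hh phi E2 x y.
  have degeq : forall x, good x -> deg E1 x = deg E2 x.
    case=> [a|i] /andP[ha hb]; last by apply: deg_inr.
    by rewrite !deg_inl (negbTE (ha : a != u1)) (negbTE (hb : a != u4)).
  move=> x y gx gy; rewrite /hh degeq // (degeq y) //.
  have -> : E1 x y = E2 x y; last by [].
  move: gx gy; case: x => [a|i]; case: y => [b|j] //= /andP[ha hb] /andP[hc hd].
    by rewrite (negbTE (ha : a != u1)) (negbTE (hb : a != u4)).
  by rewrite (negbTE (hc : b != u1)) (negbTE (hd : b != u4)).
pose G (E : rel (V0 + 'I_k.+1)%type) x := \sum_y hh phi E x y.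
have gd1 : good (inl u2) by rewrite /good !eq_inl n21 n24.
have gd3 : good (inl u3) by rewrite /good !eq_inl n31 n34.
have gd5 : good (inr ord0) by rewrite /good !eq_inrl.
have bad : forall y, ~~ good y -> y = inl u1 \/ y = inl u4.
  by move=> y; rewrite /good negb_and !negbK => /orP[]/eqP ->; [left|right].
have H1 : G E1 (inl u1) - G E2 (inl u1) = phi 2 2 - phi 1 2 + phi 2 dv.
  rewrite /G (@sum_diff _ _ _ _ [:: inl u2; inr ord0]).
  - rewrite !big_cons big_nil /hh ?D11 ?D21 ?D12 ?D22 ?Dr /E1 /E2 /= e12 eqxx (negbTE n14) /=.
    by rewrite subr0 addr0.
  - by rewrite /= ?in_cons ?in_nil ?eq_inlr.
  move=> y; rewrite !in_cons in_nil orbF negb_or => /andP[hy1 hy2]; rewrite /hh /E1 /E2.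
  case: y hy1 hy2 => [b|j]; rewrite ?eq_inl ?eq_inr ?eq_inlr ?eq_inrl => hy1 hy2 //=.
    by rewrite nb1 (negbTE hy1).
  by rewrite (negbTE hy2) !andbF.
have H4 : G E1 (inl u4) - G E2 (inl u4) = phi 1 d3 - phi 2 d3 - phi 2 dv.
  rewrite /G (@sum_diff _ _ _ _ [:: inl u3; inr ord0]).
  - rewrite !big_cons big_nil /hh ?D14 ?D24 ?D13 ?D23 ?Dr /E1 /E2 /= e43 eqxx (negbTE n41) /=.
    by rewrite eqxx /= sub0r addr0.
  - by rewrite /= ?in_cons ?in_nil ?eq_inlr.
  move=> y; rewrite !in_cons in_nil orbF negb_or => /andP[hy1 hy2]; rewrite /hh /E1 /E2.
  case: y hy1 hy2 => [b|j]; rewrite ?eq_inl ?eq_inr ?eq_inlr ?eq_inrl => hy1 hy2 //=.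
    by rewrite nb4 (negbTE hy1).
  by rewrite (negbTE hy2) !andbF.
have H2 : G E1 (inl u2) - G E2 (inl u2) = phi 2 2 - phi 2 1.
  rewrite /G (@sum_diff _ _ _ _ [:: inl u1]).
  - rewrite !big_cons big_nil /hh ?D11 ?D21 ?D12 ?D22 /E1 /E2 /= nb1' eqxx /=.
    by rewrite addr0.
  - by [].
  move=> y; rewrite !in_cons in_nil orbF => hy.
  case: (boolP (good y)) => gy; first by apply: K1.
  case: (bad y gy) => Hy; rewrite Hy in hy *; first by rewrite eqxx in hy.
  by rewrite /hh /E1 /E2 /= nb4' (negbTE n23).
have H3 : G E1 (inl u3) - G E2 (inl u3) = phi d3 1 - phi d3 2.
  rewrite /G (@sum_diff _ _ _ _ [:: inl u4]).
  - rewrite !big_cons big_nil /hh ?D13 ?D23 ?D14 ?D24 /E1 /E2 /= e34 /=.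
    by rewrite addr0.
  - by [].
  move=> y; rewrite !in_cons in_nil orbF => hy.
  case: (boolP (good y)) => gy; first by apply: K1.
  case: (bad y gy) => Hy; rewrite Hy in hy *; last by rewrite eqxx in hy.
  by rewrite /hh /E1 /E2 /= nb1' (negbTE n32).
have H5 : G E1 (inr ord0) - G E2 (inr ord0) = 0.
  rewrite /G (@sum_diff _ _ _ _ [:: inl u1; inl u4]).
  - rewrite !big_cons big_nil /hh ?D11 ?D21 ?D14 ?D24 ?Dr -/dv /E1 /E2 /= !eqxx (negbTE n14) (negbTE n41) /=.
    by rewrite subr0 sub0r addr0 subrr.
  - by rewrite /= ?in_cons ?in_nil ?eq_inl ?(negbTE n14).
  move=> y; rewrite !in_cons in_nil orbF negb_or => /andP[hy1 hy2].
  by apply: K1 => //; rewrite /good hy1 hy2.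
have Z : forall w x y, (y = inl u1 \/ y = inl u4) -> x != inl u2 -> x != inl u3 ->
    x != inr ord0 -> attach_rel e0 k w x y = false.
  move=> w x y [->|->]; case: x => [a|j]; rewrite ?eq_inl ?eq_inr => h2 h3 h5 /=;
   by rewrite ?nb1' ?nb4' ?(negbTE h2) ?(negbTE h3) ?(negbTE h5) ?andbF.
rewrite !SS_h (@sum_diff _ _ (G E1) (G E2) [:: inl u1; inl u2; inl u3; inl u4; inr ord0]).
- rewrite !big_cons big_nil H1 H2 H3 H4 H5.
  rewrite -/d3; ring.
- rewrite /= !in_cons !in_nil !eq_inl !eq_inlr /=.
  by rewrite (negbTE n12) (negbTE n13) (negbTE n14) (negbTE n23) (negbTE n24) (negbTE n34).
move=> x hx.
have [g1 g2 g3 g4 g5] : [/\ x != inl u1, x != inl u2, x != inl u3, x != inl u4 & x != inr ord0].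
  by move: hx; rewrite !in_cons in_nil orbF !negb_or => /and5P.
rewrite /G; apply: eq_bigr => y _.
have gx : good x by rewrite /good g1 g4.
case: (boolP (good y)) => gy; first by apply: K1.
by rewrite /hh /E1 /E2 !Z //; apply: bad.
Qed.

Lemma sqrt_ineq (R : rcfType) (a b c d : nat) :
  (a + b = c + d)%N -> (c * d < a * b)%N ->
  0 < Num.sqrt (a%:R : R) + Num.sqrt b%:R - Num.sqrt c%:R - Num.sqrt d%:R.
Proof.
move=> hs hp.
have hs' : (a%:R + b%:R : R) = c%:R + d%:R by rewrite -!natrD hs.
have hp' : Num.sqrt (c%:R : R) * Num.sqrt d%:R < Num.sqrt a%:R * Num.sqrt b%:R.
  rewrite -!sqrtrM ?ler0n // -!natrM ltr_sqrt ?ltr_nat //.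
  by rewrite ltr0n; apply: leq_ltn_trans hp.
have ha := sqr_sqrtr (ler0n R a); have hb := sqr_sqrtr (ler0n R b).
have hc := sqr_sqrtr (ler0n R c); have hd := sqr_sqrtr (ler0n R d).
have := sqrtr_ge0 (a%:R : R); have := sqrtr_ge0 (b%:R : R).
have := sqrtr_ge0 (c%:R : R); have := sqrtr_ge0 (d%:R : R).
move: ha hb hc hd hs' hp'.
set sa := Num.sqrt _; set sb := Num.sqrt _; set sc := Num.sqrt _; set sd := Num.sqrt _.
move=> ha hb hc hd hs' hp' ? ? ? ?.
nra.
Qed.

Definition phiSO (R : rcfType) (a b : nat) : R := Num.sqrt (a%:R ^+ 2 + b%:R ^+ 2).
Definition phiRed (R : rcfType) (a b : nat) : R :=
  Num.sqrt ((a%:R - 1) ^+ 2 + (b%:R - 1) ^+ 2).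

Lemma natr_pred (R : rcfType) (a : nat) : (0 < a)%N -> (a%:R - 1 : R) = (a.-1)%:R.
Proof. by case: a => // n _; rewrite mulrSr addrK. Qed.

Lemma key (R : rcfType) (phi : nat -> nat -> R) (d3 : nat) :
  (forall a b, phi a b = phi b a) ->
  (d3 = 3%N \/ d3 = 4%N) ->
  (forall d, d = 3%N \/ d = 4%N -> 0 < phi 2 2 + phi d 1 - phi 1 2 - phi d 2) ->
  0 < phi 2 2 *+ 2 - phi 1 2 - phi 2 1 + phi d3 1 + phi 1 d3 - phi d3 2 - phi 2 d3.
Proof.
move=> hs hd hk; have := hk d3 hd.
rewrite (hs 2%N 1%N) (hs 1%N d3) (hs 2%N d3).
set x := phi 2 2 => h. lra.
Qed.

Theorem lemma2p1 (R : rcfType) (V0 : finType) (e0 : rel V0)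
  (u1 u2 u3 u4 : V0) (k : nat) :
  simple_graph e0 -> graph_connected e0 ->
  deg e0 u1 = 1%N -> deg e0 u2 = 2%N ->
  (deg e0 u3 = 3%N \/ deg e0 u3 = 4%N) -> deg e0 u4 = 1%N ->
  e0 u1 u2 -> e0 u3 u4 ->
  SO R (attach_rel e0 k u1) > SO R (attach_rel e0 k u4) /\
  SOred R (attach_rel e0 k u1) > SOred R (attach_rel e0 k u4).
Proof.
move=> [Hs _] _ d1 d2 d3c d4 e12 e34.
have d31 : deg e0 u3 != 1%N by case: d3c => ->.
have d32 : deg e0 u3 != 2%N by case: d3c => ->.
split.
- change (SS (phiSO R) (attach_rel e0 k u4) / 2%:R < SS (phiSO R) (attach_rel e0 k u1) / 2%:R).
  have := @main_diff R (phiSO R) V0 e0 u1 u2 u3 u4 k Hs d1 d2 d31 d32 d4 e12 e34.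
  have := @key R (phiSO R) (deg e0 u3).
  move=> /(_ _ d3c) hk.
  have /hk {}hk : forall a b, phiSO R a b = phiSO R b a by move=> a b; rewrite /phiSO addrC.
  have /hk {}hk : forall d, d = 3%N \/ d = 4%N -> 0 < phiSO R 2 2 + phiSO R d 1 - phiSO R 1 2 - phiSO R d 2.
    by move=> d [->|->]; rewrite /phiSO -!natrX -!natrD; apply: sqrt_ineq.
  move=> h; move: hk; rewrite -h; lra.
- change (SS (phiRed R) (attach_rel e0 k u4) / 2%:R < SS (phiRed R) (attach_rel e0 k u1) / 2%:R).
  have := @main_diff R (phiRed R) V0 e0 u1 u2 u3 u4 k Hs d1 d2 d31 d32 d4 e12 e34.
  have := @key R (phiRed R) (deg e0 u3).
  move=> /(_ _ d3c) hk.
  have /hk {}hk : forall a b, phiRed R a b = phiRed R b a by move=> a b; rewrite /phiRed addrC.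
  have /hk {}hk : forall d, d = 3%N \/ d = 4%N -> 0 < phiRed R 2 2 + phiRed R d 1 - phiRed R 1 2 - phiRed R d 2.
    by move=> d [->|->]; rewrite /phiRed !natr_pred // -!natrX -!natrD; apply: sqrt_ineq.
  move=> h; move: hk; rewrite -h; lra.
Qed.
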